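(* Let $K$ be a positive integer, $\Delta x=2\pi/K$, and consider vectors $u=(u_1,\dots,u_K)^\top$ extended periodically by $u_{k+K}=u_k$. Let $\bar g_k,\bar f_k:\mathbb{R}^K\to\mathbb{R}$ ($k\in\mathbb{Z}$, with $\bar g_{k+K}=\bar g_k$, $\bar f_{k+K}=\bar f_k$) be differentiable maps. Suppose the initial value $u(0)$ satisfies $\sum_{k=1}^K\bar f_k(u(0))=0$. Let $u:[0,T)\to\mathbb{R}^K$ be a solution of the initial value problem for the average-difference method $$\delta_x^+\big(\dot u_k+\bar g_k(u)\big)=\mu_x^+\bar f_k(u)\qquad(k=1,\dots,K)$$ satisfying $\sum_{j=1}^K\sum_{k=1}^K\frac{\partial\bar f_j}{\partial u_k}(u(t))\neq0$ for all $t\in(0,T)$. Then $u$ is also a solution of $$\dot u_k+\bar g_k(u)=\delta^{-1}_{\mathrm{FD}}\bar f_k(u)+\mathcal{C}_{\mathrm d}(u)\qquad(k=1,\dots,K),$$ where $$\mathcal{C}_{\mathrm d}(u)=\frac{\sum_{j=1}^K\sum_{k=1}^K\frac{\partial\bar f_j}{\partial u_k}(u)\big(\bar g_k(u)-\delta^{-1}_{\mathrm{FD}}\bar f_k(u)\big)}{\sum_{j=1}^K\sum_{k=1}^K\frac{\partial\bar f_j}{\partial u_k}(u)}.$$ Conversely, a solution $u$ of the initial value problem for the latter equation satisfies the average-difference method equation.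
   Context: Here $\dot u_k=\mathrm{d}u_k/\mathrm{d}t$. The forward difference and forward average operators are $\delta_x^+w_k=(w_{k+1}-w_k)/\Delta x$ and $\mu_x^+w_k=(w_k+w_{k+1})/2$ (indices taken periodically). For a periodic sequence $w$ (so $w_0=w_K$), the discrete operator $\delta^{-1}_{\mathrm{FD}}$ is $$\delta^{-1}_{\mathrm{FD}}w_k=\Big(\frac{w_0}{2}+\sum_{i=1}^{k-1}w_i+\frac{w_k}{2}\Big)\Delta x-\frac{1}{2\pi}\sum_{i=1}^K\Big(\frac{w_0}{2}+\sum_{j=1}^{i-1}w_j+\frac{w_i}{2}\Big)(\Delta x)^2,$$ and $\delta^{-1}_{\mathrm{FD}}\bar f_k(u)$ means $\delta^{-1}_{\mathrm{FD}}$ applied to the sequence $(\bar f_k(u))_k$ and evaluated at index $k$. *)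

(* Defs.v *)
From HB Require Import structures.
From mathcomp Require Import all_boot all_order all_algebra.
From mathcomp Require Import all_classical all_reals all_analysis.
Set Implicit Arguments. Unset Strict Implicit. Unset Printing Implicit Defensive.
Import Order.TTheory GRing.Theory Num.Theory.
Import numFieldNormedType.Exports.
Local Open Scope ring_scope.

Section Defs.
Variable R : realType.

(* Convention: an element of R^K is a row vector x : 'rV[R]_K, and the paper's
   index k in {1,...,K} corresponds to the ordinal (k-1 : 'I_K).
   A K-periodic sequence (w_k)_{k in Z} is given by w : 'I_K -> R. *)

(* periodic extension to nat indices: [per w k] = w_k, with w_{k+K} = w_k
   (index k is stored at ordinal (k-1) mod K; e.g. w_0 = w_K). *)
Definition per (K : nat) (w : 'I_K -> R) (k : nat) : R :=
  \sum_(j < K | (j : nat) == ((k + K).-1 %% K)%N) w j.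

Definition dx (K : nat) : R := 2 * pi / K%:R.

Definition fdiff (K : nat) (w : 'I_K -> R) (k : nat) : R :=
  (per w k.+1 - per w k) / dx K.

Definition favg (K : nat) (w : 'I_K -> R) (k : nat) : R :=
  (per w k + per w k.+1) / 2.

Definition trap (K : nat) (w : 'I_K -> R) (k : nat) : R :=
  per w 0 / 2 + \sum_(1 <= i < k) per w i + per w k / 2.

Definition dinvFD (K : nat) (w : 'I_K -> R) (k : nat) : R :=
  trap w k * dx K
  - (2 * pi)^-1 * \sum_(1 <= i < K.+1) trap w i * dx K ^+ 2.

Definition pderiv (K : nat) (f : 'rV[R]_K -> R) (k : 'I_K) (x : 'rV[R]_K) : R :=
  'D_(delta_mx 0 k) f x.

Definition Cd (K : nat) (f g : 'I_K -> 'rV[R]_K -> R) (x : 'rV[R]_K) : R :=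
  (\sum_(j < K) \sum_(k < K)
      pderiv (f j) k x * (g k x - dinvFD (fun i => f i x) k.+1))
  / (\sum_(j < K) \sum_(k < K) pderiv (f j) k x).

End Defs.

(* Main.v *)
Require Import Defs.
From HB Require Import structures.
From mathcomp Require Import all_boot all_order all_algebra.
From mathcomp Require Import all_classical all_reals all_analysis.
From mathcomp Require Import ring lra zify.
Import Order.TTheory GRing.Theory Num.Theory.
Import numFieldNormedType.Exports.
Local Open Scope classical_set_scope.
Local Open Scope ring_scope.
Lemma aux1 (F: realFieldType) (a S b c d C : F) : (a/2 + (S+b) + c/2)*d - C - ((a/2+S+b/2)*d - C) = (b+c)/2*d.
Proof. by field. Qed.
Lemma aux2 (F: realFieldType) (a S b d C : F) : (a / 2 + S + b / 2) * d - C - ((a / 2 + 0 + b / 2) * d - C) = S * d.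
Proof. by ring. Qed.
Section Alg.
Variable R : realType.
Variable K : nat.
Hypothesis K0 : (0 < K)%N.

Lemma per_S (w : 'I_K -> R) (k : 'I_K) : per w k.+1 = w k.
Proof.
rewrite /per addSn /= modnDr modn_small //.
rewrite (eq_bigl (fun j => j == k)); first by rewrite big_pred1_eq.
by move=> j.
Qed.

Lemma per_KS (w : 'I_K -> R) : per w K.+1 = per w 1.
Proof. by rewrite /per addSn /= add0n modnDl modnn. Qed.

Lemma dx_gt0 : 0 < dx R K.
Proof. by rewrite /dx divr_gt0 // ?mulr_gt0 ?pi_gt0 // ltr0n. Qed.

Lemma dinv_diff (F : 'I_K -> R) n : (0 < n)%N ->
  dinvFD F n.+1 - dinvFD F n = (per F n + per F n.+1) / 2 * dx R K.
Proof.
move=> n0; rewrite /dinvFD /trap big_nat_recr //=.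
set a := per F 0; set b := per F n; set c := per F n.+1.
set S := \sum_(1 <= i < n) _.
set d := dx R K.
exact: aux1.
Qed.

Lemma sum_per (F : 'I_K -> R) : \sum_(1 <= i < K.+1) per F i = \sum_(k < K) F k.
Proof.
rewrite big_add1 /= big_mkord; apply: eq_bigr => k _; exact: per_S.
Qed.

Lemma dinv_sum (F : 'I_K -> R) :
  dinvFD F K.+1 - dinvFD F 1 = (\sum_(k < K) F k) * dx R K.
Proof.
rewrite /dinvFD /trap per_KS (@big_geq _ _ _ 1 1) // sum_per.
set a := per F 0; set b := per F 1; set S := \sum_(k < K) _.
set d := dx R K.
exact: aux2.
Qed.

Lemma fdiff_eq (w F : 'I_K -> R) (k : nat) : 
  (fdiff w k.+1 = favg F k.+1) <->
  (per w k.+2 - per w k.+1 = dinvFD F k.+2 - dinvFD F k.+1).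
Proof.
rewrite dinv_diff // /fdiff /favg; have := dx_gt0; set d := dx R K => d0.
split => E.
  by rewrite -E divfK // gt_eqF.
apply: (mulIf (lt0r_neq0 d0)); rewrite divfK ?lt0r_neq0 //.
Qed.

Lemma core1 (w F : 'I_K -> R) :
  (forall k : 'I_K, fdiff w k.+1 = favg F k.+1) ->
  \sum_(k < K) F k = 0 /\
  forall k : 'I_K, w k = dinvFD F k.+1 + (per w 1 - dinvFD F 1).
Proof.
move=> A.
pose e n := per w n - dinvFD F n.
have Ae (k : nat) : (k < K)%N -> e k.+2 = e k.+1.
  move=> kK; have /fdiff_eq := A (Ordinal kK) => /= E.
  rewrite /e; apply/eqP; rewrite -subr_eq0.
  have -> : (per w k.+2 - dinvFD F k.+2) - (per w k.+1 - dinvFD F k.+1)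
     = (per w k.+2 - per w k.+1) - (dinvFD F k.+2 - dinvFD F k.+1) by ring.
  by rewrite E subrr.
have Ee : forall n, (n <= K)%N -> e n.+1 = e 1.
  elim=> [//|n IH] nK; rewrite Ae //; exact: IH (ltnW nK).
split.
  have := Ee K (leqnn K); rewrite /e per_KS => /addrI /oppr_inj H.
  have := dinv_sum F; rewrite H subrr => /esym /eqP; rewrite mulf_eq0.
  by case/orP => [/eqP //|]; rewrite (gt_eqF dx_gt0).
move=> k; have := Ee k (ltnW (ltn_ord k)); rewrite /e per_S => <-; ring.
Qed.

Lemma core2 (w F : 'I_K -> R) c :
  \sum_(k < K) F k = 0 ->
  (forall k : 'I_K, w k = dinvFD F k.+1 + c) ->
  forall k : 'I_K, fdiff w k.+1 = favg F k.+1.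
Proof.
move=> S0 B.
have P n : (0 < n <= K.+1)%N -> per w n = dinvFD F n + c.
  case: n => [//|n] /= nK.
  case: (ltnP n K) => nK'.
    by rewrite (per_S w (Ordinal nK')) B.
  have -> : n = K by lia.
  rewrite per_KS (per_S w (Ordinal K0)) B /=.
  have := dinv_sum F; rewrite S0 mul0r => /eqP; rewrite subr_eq0 => /eqP ->.
  by [].
move=> k; apply/fdiff_eq; rewrite !P //= ?ltnS ?ltn_ord //; last exact: ltnW.
ring.
Qed.
End Alg.
Section An.
Variable R : realType.
Variable K : nat.

Lemma chain (f : 'rV[R]_K -> R) (u : R -> 'rV[R]_K) t :
  (forall x, differentiable f x) -> derivable u t 1 ->
  is_derive t 1 (f \o u) (\sum_(k < K) pderiv f k (u t) * ('D_1 u t) 0 k).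
Proof.
move=> df du.
have dut : differentiable u t by apply/derivable1_diffP.
have dfu : differentiable (f \o u) t by exact: differentiable_comp.
apply: DeriveDef; first exact/derivable1_diffP.
rewrite deriveE // diff_comp //= -[('d u t) 1]deriveE //.
rewrite {1}(row_sum_delta ('D_1 u t)) linear_sum; apply: eq_bigr => k _.
by rewrite linearZ /= /pderiv [in RHS]deriveE // mulrC.
Qed.

Lemma chain_sum (f : 'I_K -> 'rV[R]_K -> R) (u : R -> 'rV[R]_K) t :
  (forall j x, differentiable (f j) x) -> derivable u t 1 ->
  is_derive t 1 (fun s => \sum_(j < K) f j (u s))
    (\sum_(j < K) \sum_(k < K) pderiv (f j) k (u t) * ('D_1 u t) 0 k).
Proof.
move=> df du.
have := is_derive_sum (h := fun j => f j \o u) (x := t) (v := 1) (fun j => @chain (f j) u t (df j) du).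
rewrite fct_sumE => H; exact: H.
Qed.
End An.
Section An2.
Variable R : realType.

Lemma near_in (T : \bar R) (t : R) : 0 < t -> (t%:E < T)%E ->
  \forall s \near t, 0 < s /\ (s%:E < T)%E.
Proof.
case: T => [r| |] t0 //=.
- rewrite lte_fin => tr; near=> s; split.
    by near: s; exact: lt_nbhsr.
  by rewrite lte_fin; near: s; exact: lt_nbhsl.
- move=> _; near=> s; split; last exact: ltry.
  by near: s; exact: lt_nbhsr.
Unshelve. all: by end_near.
Qed.

Lemma const0 (T : \bar R) (h : R -> R) :
  (forall s, 0 < s -> (s%:E < T)%E -> is_derive s 1 h 0) ->
  h x @[x --> 0^'+] --> h 0 -> h 0 = 0 ->
  forall t, 0 < t -> (t%:E < T)%E -> h t = 0.
Proof.
move=> dh c0 h0 t t0 tT.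
have cont s : 0 < s -> (s%:E < T)%E -> {for s, continuous h}.
  move=> s0 sT; apply: differentiable_continuous; apply/derivable1_diffP.
  by have [] := dh s s0 sT.
have H1 : forall x, x \in `]0, t[ -> is_derive x (1:R) h 0.
  move=> x; rewrite in_itv /= => /andP[x0 xt]; apply: dh => //.
  by apply: lt_trans tT; rewrite lte_fin.
have H2 : {within `[0, t], continuous h}.
  apply/continuous_within_itvP => //; split => //.
    move=> x; rewrite in_itv /= => /andP[x0 xt]; apply: cont => //.
    by apply: lt_trans tT; rewrite lte_fin.
  by apply: cvg_at_left_filter; exact: cont.
have [c _] := MVT t0 H1 H2.
by rewrite mul0r h0 subr0.
Qed.
End An2.
Lemma sum_id (R : realType) (K : nat) (p : 'I_K -> 'I_K -> R) (du gg D : 'I_K -> R) c :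
  (forall k, du k + gg k = D k + c) ->
  \sum_(j < K) \sum_(k < K) p j k * du k
  = c * (\sum_(j < K) \sum_(k < K) p j k)
    - \sum_(j < K) \sum_(k < K) p j k * (gg k - D k).
Proof.
move=> H; rewrite mulr_sumr -sumrB; apply: eq_bigr => j _.
rewrite mulr_sumr -sumrB; apply: eq_bigr => k _.
have -> : du k = D k + c - gg k by rewrite -H; ring.
ring.
Qed.

Theorem mainTheorem6 (R : realType) (K : nat) (T : \bar R)
    (f g : 'I_K -> 'rV[R]_K -> R) (u : R -> 'rV[R]_K) :
  (0 < K)%N ->
  (forall (j : 'I_K) (x : 'rV[R]_K), differentiable (f j) x) ->
  (forall (j : 'I_K) (x : 'rV[R]_K), differentiable (g j) x) ->
  \sum_(k < K) f k (u 0) = 0 ->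
  u x @[x --> 0^'+] --> u 0 ->
  (forall t : R, 0 < t -> (t%:E < T)%E -> derivable u t 1) ->
  (forall t : R, 0 < t -> (t%:E < T)%E ->
     \sum_(j < K) \sum_(k < K) pderiv (f j) k (u t) != 0) ->
  (forall t : R, 0 < t -> (t%:E < T)%E -> forall k : 'I_K,
     fdiff (fun i : 'I_K => ('D_1 u t) 0 i + g i (u t)) k.+1
     = favg (fun i : 'I_K => f i (u t)) k.+1)
  <->
  (forall t : R, 0 < t -> (t%:E < T)%E -> forall k : 'I_K,
     ('D_1 u t) 0 k + g k (u t)
     = dinvFD (fun i : 'I_K => f i (u t)) k.+1 + Cd f g (u t)).
Proof.
move=> K0 df dg S0 cu du dS; split.
- move=> A t t0 tT k.
  have [_ Hw] := @core1 R K K0 _ _ (A t t0 tT).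
  set c := per _ 1 - dinvFD _ 1 in Hw.
  have hz s : 0 < s -> (s%:E < T)%E -> \sum_(j < K) f j (u s) = 0.
    by move=> s0 sT; have [] := @core1 R K K0 _ _ (A s s0 sT).
  have Dc : is_derive t (1:R) (fun=> (0:R)) 0 := is_derive_cst _ _ _.
  have D0 : is_derive t (1:R) (fun s => \sum_(j < K) f j (u s)) 0.
    apply: (near_eq_is_derive _ Dc).
    by have := @near_in R T t t0 tT; apply: filterS => s [s0 sT]; rewrite hz.
  have Dh := @chain_sum R K f u t df (du t t0 tT).
  have := @derive_val _ _ _ _ _ _ _ Dh; rewrite (@derive_val _ _ _ _ _ _ _ D0).
  rewrite (@sum_id R K (fun j k => pderiv (f j) k (u t)) _ (fun k => g k (u t))
             (fun k => dinvFD (fun i => f i (u t)) k.+1) c) //.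
  move=> /eqP; rewrite eq_sym subr_eq0 => /eqP E.
  rewrite Hw /Cd -E mulfK //; exact: dS.
- move=> B t t0 tT k.
  have hz : \sum_(j < K) f j (u t) = 0.
    apply: (@const0 R T (fun s => \sum_(j < K) f j (u s))) => //.
    + move=> s s0 sT.
      have Dh := @chain_sum R K f u s df (du s s0 sT).
      rewrite (@sum_id R K (fun j k => pderiv (f j) k (u s)) _ (fun k => g k (u s))
             (fun k => dinvFD (fun i => f i (u s)) k.+1) (Cd f g (u s))) in Dh;
        last exact: B.
      by rewrite /Cd divfK ?subrr in Dh; [exact: Dh | exact: dS].
    + have dG : differentiable (\sum_(j < K) f j) (u 0).
        by apply: differentiable_sum => j; exact: df.
      rewrite fct_sumE in dG.
      have cG := differentiable_continuous dG.
      exact: (cvg_comp u _ cu cG).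
  exact: (@core2 R K K0 _ _ (Cd f g (u t)) hz (B t t0 tT)).
Qed.
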